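(* If $v\in\mathfrak{S}_n$ is boolean with Robinson–Schensted shape $\lambda$, then $\mathbf{a}(v)=\lambda_2(v)$.
   Context: A permutation is boolean if its reduced words (in the simple reflections $\sigma_i=(i,i+1)$) have no repeated letters. $\lambda_2(v)$ is the length of the second row of the shape $\lambda$ of the tableaux assigned to $v$ by the Robinson–Schensted correspondence (zero if absent). Lusztig's $\mathbf{a}$-function on $\mathfrak{S}_n$ is the unique function constant on two-sided Kazhdan–Lusztig cells (sets of permutations with equal Robinson–Schensted shape) with $\mathbf{a}(w)=\ell(w)$ whenever $w$ is the longest element of a parabolic subgroup. *)

(* Defs.v *)
From mathcomp Require Import all_boot all_fingroup.
Set Implicit Arguments. Unset Strict Implicit. Unset Printing Implicit Defensive.

(* Simple reflection sigma_i = (i, i+1) (0-based); letters with i.+1 >= n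
   are never used in words (see [valid_word]). *)
Definition sref (n i : nat) : 'S_n :=
  match (insub i : option 'I_n), (insub i.+1 : option 'I_n) with
  | Some a, Some b => tperm a b
  | _, _ => 1%g
  end.

Definition valid_word (n : nat) (s : seq nat) : bool := all (fun i => i.+1 < n) s.

Definition word_prod (n : nat) (s : seq nat) : 'S_n :=
  foldr (fun i p => (sref n i * p)%g) 1%g s.

Definition reduced_word (n : nat) (w : 'S_n) (s : seq nat) : Prop :=
  [/\ valid_word n s, word_prod n s = w &
      forall t, valid_word n t -> word_prod n t = w -> size s <= size t].

Definition has_length (n : nat) (w : 'S_n) (k : nat) : Prop :=
  exists s, reduced_word w s /\ size s = k.

Definition boolean_perm (n : nat) (w : 'S_n) : Prop :=
  forall s, reduced_word w s -> uniq s.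

Fixpoint bump_row (r : seq nat) (x : nat) : option nat * seq nat :=
  match r with
  | [::] => (None, [:: x])
  | y :: r' => if x < y then (Some y, x :: r')
               else let: (b, r'') := bump_row r' x in (b, y :: r'')
  end.

Fixpoint ins_tab (t : seq (seq nat)) (x : nat) : seq (seq nat) :=
  match t with
  | [::] => [:: [:: x]]
  | r :: t' => let: (b, r') := bump_row r x in
               match b with
               | None => r' :: t'
               | Some y => r' :: ins_tab t' y
               end
  end.

Definition rs_P (s : seq nat) : seq (seq nat) := foldl ins_tab [::] s.

Definition rs_shape (n : nat) (w : 'S_n) : seq nat :=
  map size (rs_P [seq val (w i) | i <- enum 'I_n]).

Definition lambda2 (n : nat) (w : 'S_n) : nat := nth 0 (rs_shape w) 1.

Definition parabolic (n : nat) (J : {set 'I_n}) : {group 'S_n} :=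
  <<[set sref n (val j) | j in J]>>%G.

Definition longest_in (n : nat) (G : {set 'S_n}) (w : 'S_n) : Prop :=
  w \in G /\ forall u ku kw, u \in G -> has_length u ku -> has_length w kw -> ku <= kw.

(* The defining properties of Lusztig's a-function on S_n: constant on
   two-sided cells (= sets of equal RS shape) and equal to the length on
   longest elements of parabolic subgroups. *)
Definition is_a_function (n : nat) (a : 'S_n -> nat) : Prop :=
  (forall u w : 'S_n, rs_shape u = rs_shape w -> a u = a w) /\
  (forall (J : {set 'I_n}) (w : 'S_n) (k : nat),
      longest_in (parabolic J) w -> has_length w k -> a w = k).

(* Main.v *)
Require Import Defs.
From mathcomp Require Import all_boot all_fingroup.
From mathcomp Require Import zify.
From Stdlib Require Import Classical.
Set Implicit Arguments. Unset Strict Implicit. Unset Printing Implicit Defensive.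


Lemma sref_val n i (x : 'I_n) : i.+1 < n ->
  val (sref n i x) = if val x == i then i.+1 else if val x == i.+1 then i else val x.
Proof.
move=> hi; have hi0 : i < n by apply: ltnW.
rewrite /sref (insubT (fun k => k < n) hi0) (insubT (fun k => k < n) hi) /=.
case: tpermP => [->|->|ne1 ne2] /=; first by rewrite eqxx.
  by rewrite (_ : (i.+1 == i) = false) ?eqxx //; apply/eqP; lia.
have -> : (val x == i) = false by apply/eqP => h; apply: ne1; apply: val_inj.
by have -> : (val x == i.+1) = false by apply/eqP => h; apply: ne2; apply: val_inj.
Qed.

Lemma word_prod_cat n s t : word_prod n (s ++ t) = (word_prod n s * word_prod n t)%g.
Proof. by elim: s => [|a s IH] /=; rewrite ?mul1g // IH mulgA. Qed.

Lemma word_prod_rcons n s a : word_prod n (rcons s a) = (word_prod n s * sref n a)%g.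
Proof. by rewrite -cats1 word_prod_cat /= mulg1. Qed.

Lemma word_prod_cons n a s x : word_prod n (a :: s) x = word_prod n s (sref n a x).
Proof. by rewrite /= permM. Qed.

Lemma test (a b : nat) : a %/ 2 = b %/ 2 -> a %% 2 = 0 -> a <= b -> b <= a.+1.
Proof. lia. Qed.

Ltac nv := rewrite -?[\val _]/(nat_of_ord _).
Ltac nva := repeat match goal with
  | H : context [@isSub.val_subdef nat _ _ _ ?x] |- _ => change (@isSub.val_subdef nat _ _ _ x) with (nat_of_ord x) in H
  end; nv.

Definition flip (x : nat) := if x %% 2 == 0 then x.+1 else x - 1.
Definition tw (P : pred nat) m := [seq 2 * j | j <- [seq j <- iota 0 m | P j]].

Lemma iotaSr m : iota 0 m.+1 = rcons (iota 0 m) m.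
Proof. by rewrite -addn1 iotaD /= cats1. Qed.

Lemma tw_val n m P (x : 'I_n) : 2 * m <= n ->
  val (word_prod n (tw P m) x) =
  if (val x < 2 * m) && P (val x %/ 2) then flip (val x) else val x.
Proof.
case: x => x hx0 /=.
elim: m => [|m IH] hm; first by rewrite /tw /= perm1.
have hm' : 2 * m <= n by lia.
rewrite /tw iotaSr filter_rcons; case hP: (P m).
  rewrite map_rcons word_prod_rcons permM sref_val; last by lia.
  rewrite -/(tw P m) -![\val _]/(nat_of_ord _) IH //=.
  case: (ltnP x (2 * m)) => hx /=.
    have -> : x < 2 * m.+1 by lia.
    by case: (P _); rewrite /flip /=; have [e|e] := eqVneq (x %% 2) 0; rewrite ?e ?(negPf e) /=; repeat case: ifPn => /eqP ?; lia.
  have [->|ne] := eqVneq x (2 * m).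
    rewrite /= (_ : 2 * m %/ 2 = m); last lia.
    rewrite hP (_ : 2 * m < 2 * m.+1) /=; last lia.
    by rewrite /flip; case: ifPn => /eqP ?; lia.
  rewrite ?(negPf ne); have [->|ne2] := eqVneq x (2 * m).+1.
    rewrite /= (_ : (2 * m).+1 %/ 2 = m); last lia.
    rewrite hP (_ : (2 * m).+1 < 2 * m.+1) /=; last lia.
    by rewrite /flip; case: ifPn => /eqP ?; lia.
  by rewrite (_ : x < 2 * m.+1 = false) //; lia.
rewrite -/(tw P m) -![\val _]/(nat_of_ord _) IH //=.
case: (ltnP x (2 * m)) => hx /=.
  by have -> : x < 2 * m.+1 by lia.
case: ifP => // /andP [h1 h2]; have : x %/ 2 = m by lia.
by move=> e; rewrite e hP in h2.
Qed.

Definition mu n m (p : 'S_n) : nat :=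
  count (fun j => if insub (2 * j) is Some x then p x != x else false) (iota 0 m).

Lemma mu_step n m i (p : 'S_n) : i.+1 < n -> mu m (sref n i * p)%g <= mu m p + 1.
Proof.
move=> hi; rewrite /mu.
set L := (fun j => _ : bool).
set Pp := (fun j => _ : bool).
pose R := (fun j : nat => (2 * j == i) || (2 * j == i.+1)).
apply: (@leq_trans (count (predU Pp R) (iota 0 m))).
  apply: sub_count => j; rewrite /Pp /L /R /=.
  case: insubP => //= x _ ex; rewrite permM.
  have [e|e] := boolP ((2 * j == i) || (2 * j == i.+1)); first by rewrite orbT.
  have -> : sref n i x = x.
    by apply: val_inj; rewrite sref_val //; nv; rewrite ex; move: e; case: eqP => //; case: eqP.
  by move=> ->.
have hU := count_predUI Pp R (iota 0 m).
have hR : count R (iota 0 m) <= 1.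
  apply: (@leq_trans (count (pred1 (i.+1 %/ 2)) (iota 0 m))).
    apply: sub_count => j; rewrite /R /= => /orP [] /eqP h; apply/eqP; lia.
  by rewrite count_uniq_mem ?iota_uniq //; case: (_ \in _).
lia.
Qed.

Lemma mu_word n m t : valid_word n t -> mu m (word_prod n t) <= size t.
Proof.
elim: t => [|i t IH] /=.
  move=> _; rewrite leqn0 -(negbK (_ == 0)) -lt0n -has_count; apply/hasPn => j _.
  by case: insubP => //= x _ _; rewrite perm1 eqxx.
move=> /andP [hi ht]; apply: leq_trans (mu_step m (word_prod n t) hi) _.
by rewrite addn1 ltnS IH.
Qed.

Lemma mu_full n m : 2 * m <= n -> mu m (word_prod n (tw predT m)) = m.
Proof.
move=> hm; rewrite /mu -[X in _ = X](size_iota 0 m) -count_predT.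
apply: eq_in_count => j; rewrite mem_iota add0n => /andP [_ hj].
case: insubP => [x _ ex|]; last by rewrite /=; lia.
rewrite /=; apply/eqP => e; move: (congr1 val e); rewrite tw_val // ex /=.
have -> : 2 * j < 2 * m by lia.
by rewrite /flip; case: ifPn => /eqP ?; lia.
Qed.

Lemma valid_tw n m P : 2 * m <= n -> valid_word n (tw P m).
Proof.
move=> hm; apply/allP => x /mapP [j]; rewrite mem_filter mem_iota => /andP [_ /andP [_ hj]] ->.
lia.
Qed.

Lemma size_tw m P : size (tw P m) <= m.
Proof. by rewrite size_map size_filter -[X in _ <= X](size_iota 0 m) count_size. Qed.

Lemma flip_half x : flip x %/ 2 = x %/ 2.
Proof. rewrite /flip; case: ifP => ?; lia. Qed.
Lemma flipK x : flip (flip x) = x.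
Proof. rewrite /flip; have [e|e] := eqVneq (x %% 2) 0; rewrite ?e ?(negPf e) /=; case: ifP => ?; lia. Qed.
Lemma flip_lt x k : (flip x < 2 * k) = (x < 2 * k).
Proof. rewrite /flip; case: ifP => ?; apply/idP/idP => ?; lia. Qed.

Definition Pf m (f : {ffun 'I_m -> bool}) : pred nat :=
  fun j => [exists k : 'I_m, (val k == j) && f k].

Lemma Pf_lt m (f : {ffun 'I_m -> bool}) j (hj : j < m) : Pf f j = f (Ordinal hj).
Proof.
apply/existsP/idP => [[k /andP [/eqP e fk]]|fj].
  by have <- : k = Ordinal hj by apply: val_inj.
by exists (Ordinal hj); rewrite eqxx.
Qed.

Lemma Pf_ge m (f : {ffun 'I_m -> bool}) j : m <= j -> Pf f j = false.
Proof. by move=> hj; apply/existsP => [[k /andP [/eqP e _]]]; move: hj; rewrite -e leqNgt ltn_ord. Qed.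

Lemma tw_ext m P Q : (forall j, j < m -> P j = Q j) -> tw P m = tw Q m.
Proof.
move=> h; rewrite /tw; congr map; apply: eq_in_filter => j.
by rewrite mem_iota add0n => /andP [_ /h].
Qed.

Lemma tw_mul n m P Q : 2 * m <= n ->
  (word_prod n (tw P m) * word_prod n (tw Q m))%g = word_prod n (tw (fun j => P j (+) Q j) m).
Proof.
move=> hm; apply/permP => x; apply: val_inj; rewrite permM.
rewrite (tw_val Q) //; nv; rewrite (tw_val P) //; nv; rewrite (tw_val (fun j => P j (+) Q j)) //.
case hx: (nat_of_ord x < 2 * m); case hp: (P _); rewrite /= ?flip_lt ?flip_half ?hx ?hp //=;
  by case hq: (Q _); rewrite /= ?hq ?flipK.
Qed.

Definition Sset n m : {set 'S_n} :=
  [set u : 'S_n | [exists f : {ffun 'I_m -> bool}, u == word_prod n (tw (Pf f) m)]].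

Lemma group_Sset n m : 2 * m <= n -> group_set (Sset n m).
Proof.
move=> hm; apply/group_setP; split.
  rewrite inE; apply/existsP; exists [ffun=> false]; apply/eqP.
  rewrite (@tw_ext m _ pred0) /tw.
    by rewrite filter_pred0.
  by move=> j hj; rewrite Pf_lt ffunE.
move=> u v; rewrite !inE => /existsP [f /eqP ->] /existsP [g /eqP ->].
apply/existsP; exists [ffun k => f k (+) g k]; apply/eqP.
rewrite tw_mul //; congr word_prod; apply: tw_ext => j hj.
by rewrite !(Pf_lt _ hj) ffunE.
Qed.

Definition Jset n m : {set 'I_n} := [set j : 'I_n | (val j < 2 * m) && (val j %% 2 == 0)].

Lemma parabolic_sub n m (hm : 2 * m <= n) :
  parabolic (Jset n m) \subset (Group (group_Sset hm)).
Proof.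
rewrite /parabolic gen_subG; apply/subsetP => u /imsetP [j]; rewrite inE => /andP [hj1 hj2] ->.
change (is_true (nat_of_ord j < 2 * m)) in hj1; change (is_true (nat_of_ord j %% 2 == 0)) in hj2.
rewrite inE; apply/existsP; exists [ffun k : 'I_m => val k == val j %/ 2]; apply/eqP.
apply/permP => x; apply: val_inj; rewrite sref_val; last by nv; lia.
rewrite tw_val //; nv.
case: (ltnP (nat_of_ord x) (2 * m)) => hx /=.
  have hx2 : nat_of_ord x %/ 2 < m by lia.
  rewrite (Pf_lt _ hx2) ffunE /= /flip.
  by nv; repeat case: ifP => ?; lia.
by nv; repeat case: ifP => ?; lia.
Qed.

Lemma word_prod_in n (G : {group 'S_n}) t :
  (forall a, a \in t -> sref n a \in G) -> word_prod n t \in G.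
Proof.
elim: t => [|a t IH] h /=; first exact: group1.
by rewrite groupM ?h ?mem_head // IH // => b hb; rewrite h // inE hb orbT.
Qed.

Definition wm n m := word_prod n (tw predT m).

Lemma wm_in n m : 2 * m <= n -> wm n m \in parabolic (Jset n m).
Proof.
move=> hm; apply: word_prod_in => a /mapP [j]; rewrite mem_filter mem_iota => /andP [_ /andP [_ hj]] ->.
have h2 : 2 * j < n by nva; lia.
have -> : 2 * j = val (Ordinal h2) by [].
apply: mem_gen; apply: imset_f; rewrite inE /=; apply/andP; split; nva; lia.
Qed.

Lemma size_tw_full m : size (tw predT m) = m.
Proof. by rewrite /tw filter_predT size_map size_iota. Qed.

Lemma wm_len n m : 2 * m <= n -> has_length (wm n m) m.
Proof.
move=> hm; exists (tw predT m); split; last exact: size_tw_full.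
split; [exact: valid_tw | by [] | move=> t vt pt].
by rewrite size_tw_full -{1}(mu_full hm) -/(wm n m) -pt mu_word.
Qed.

Lemma wm_longest n m : 2 * m <= n -> longest_in (parabolic (Jset n m)) (wm n m).
Proof.
move=> hm; split; first exact: wm_in.
move=> u ku kw hu [s [[vs ps mins] <-]] [s' [[vs' ps' mins'] <-]].
have := subsetP (parabolic_sub hm) u hu; rewrite inE => /existsP [f /eqP hf].
apply: (@leq_trans m).
  apply: leq_trans (size_tw m (Pf f)); apply: mins; [exact: valid_tw | by rewrite hf].
by rewrite -{1}(mu_full hm) -/(wm n m) -ps' mu_word.
Qed.

Lemma sref_tperm n (a b : 'I_n) : val b = (val a).+1 -> sref n (val a) = tperm a b.
Proof.
move=> hb; have hbn : (val a).+1 < n by rewrite -hb ltn_ord.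
apply/permP => x; apply: val_inj; rewrite sref_val //.
case: tpermP => [->|->|ne1 ne2]; rewrite ?eqxx ?hb //.
  by rewrite eqxx (_ : ((val a).+1 == val a) = false) //; apply/eqP; nva; lia.
case: eqP => [e|_]; first by case: ne1; apply: val_inj.
by case: eqP => [e|_] //; case: ne2; apply: val_inj; rewrite e hb.
Qed.

Lemma tperm_word_aux n k : forall (a b : 'I_n), val b = val a + k.+1 ->
  exists t, valid_word n t /\ word_prod n t = tperm a b.
Proof.
elim: k => [|k IH] a b hb.
  exists [:: val a]; split; first by rewrite /valid_word /= andbT; have := ltn_ord b; nva; nva; lia.
  by rewrite /= mulg1 (sref_tperm (b := b)) //; nva; nva; lia.
have hc : val a + k.+1 < n by have := ltn_ord b; nva; lia.
have [t [vt pt]] := IH a (Ordinal hc) erefl.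
exists (val (Ordinal hc) :: t ++ [:: val (Ordinal hc)]); split.
  by move: vt; rewrite /valid_word /= all_cat => -> /=; rewrite andbT; have := ltn_ord b; nva; lia.
have hs : sref n (val a + k.+1) = tperm (Ordinal hc) b by apply: (sref_tperm (a := Ordinal hc)); nva; rewrite /=; lia.
rewrite /= word_prod_cat pt /= mulg1 hs.
have : tperm a b = ((tperm a (Ordinal hc)) ^ tperm (Ordinal hc) b)%g.
  rewrite tpermJ tpermL tpermD //; apply/eqP => e; move: (congr1 val e) => /=; nva; lia.
by rewrite conjgE tpermV mulgA => ->.
Qed.

Lemma tperm_word n (a b : 'I_n) : exists t, valid_word n t /\ word_prod n t = tperm a b.
Proof.
wlog hab : a b / val a <= val b.
  move=> W; case: (leqP (val a) (val b)) => h; first exact: W.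
  by rewrite tpermC; apply: W; apply: ltnW.
have [e|ne] := eqVneq a b; first by exists [::]; rewrite e tperm1.
have hlt : val a < val b by rewrite ltn_neqAle hab andbT; apply: contra ne => /eqP e; apply/eqP; apply: val_inj.
apply: (@tperm_word_aux n (val b - val a).-1); nva; lia.
Qed.

Lemma word_exists n (v : 'S_n) : exists t, valid_word n t /\ word_prod n t = v.
Proof.
have [ts -> _] := prod_tpermP v.
elim: ts => [|p ts [t [vt pt]]]; first by exists [::]; rewrite big_nil.
have [t1 [vt1 pt1]] := tperm_word p.1 p.2.
exists (t1 ++ t); split; first by move: vt1 vt; rewrite /valid_word all_cat => -> ->.
by rewrite word_prod_cat pt1 pt big_cons.
Qed.

Lemma reduced_exists n (v : 'S_n) : exists s, reduced_word v s.
Proof.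
have [t0 [vt0 pt0]] := word_exists v.
suff : forall k t, valid_word n t -> word_prod n t = v -> size t <= k -> exists s, reduced_word v s.
  by move=> /(_ (size t0) t0 vt0 pt0 (leqnn _)).
elim=> [|k IH] t vt pt hs.
  by exists t; split => // t' _ _; move: hs; rewrite leqn0 => /eqP ->.
case: (classic (exists t', [/\ valid_word n t', word_prod n t' = v & size t' < size t])).
  move=> [t' [vt' pt' hlt]]; apply: (IH t') => //; nva; lia.
move=> hno; exists t; split => // t' vt' pt'; rewrite leqNgt; apply/negP => hlt.
by apply: hno; exists t'.
Qed.

Lemma cut_word n i s : valid_word n s -> i \notin s ->
  forall x : 'I_n, (nat_of_ord (word_prod n s x) <= i) = (nat_of_ord x <= i).
Proof.
elim: s => [|j s IH] //=; first by move=> _ _ x; rewrite perm1.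
move=> /andP [hj vs]; rewrite inE negb_or => /andP [ne ni] x.
rewrite permM IH //.
have := sref_val x hj; nva => ->.
move: ne; repeat case: ifP => ?; lia.
Qed.

Lemma tau_mono n i (a b : 'I_n) : i.+1 < n -> nat_of_ord a < nat_of_ord b ->
  ~~ ((nat_of_ord a == i) && (nat_of_ord b == i.+1)) ->
  nat_of_ord (sref n i a) < nat_of_ord (sref n i b).
Proof.
move=> hi hab hn.
have := sref_val a hi; have := sref_val b hi; nva => -> ->.
move: hn; repeat case: ifP => ?; lia.
Qed.

Lemma no321_word n s : valid_word n s -> uniq s ->
  forall p q r : 'I_n, nat_of_ord p < nat_of_ord q -> nat_of_ord q < nat_of_ord r ->
  ~ (nat_of_ord (word_prod n s q) < nat_of_ord (word_prod n s p) /\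
     nat_of_ord (word_prod n s r) < nat_of_ord (word_prod n s q)).
Proof.
elim: s => [|i s IH] /=; first by move=> _ _ p q r hpq hqr; rewrite !perm1; lia.
move=> /andP [hi vs] /andP [ni us] p q r hpq hqr.
rewrite !permM.
have cut := cut_word vs ni.
have sp := sref_val p hi; have sq := sref_val q hi; have sr := sref_val r hi.
nva.
have [/andP [/eqP ep /eqP eq]|h1] := boolP ((nat_of_ord p == i) && (nat_of_ord q == i.+1)).
  have c1 := cut (sref n i q); have c2 := cut (sref n i r).
  move: c1 c2; rewrite sq sr eq !eqxx (_ : (i.+1 == i) = false); last by apply/eqP; lia.
  have -> : (nat_of_ord r == i) = false by apply/eqP; lia.
  have -> : (nat_of_ord r == i.+1) = false by apply/eqP; lia.
  move=> c1 c2; lia.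
have [/andP [/eqP eq /eqP er]|h2] := boolP ((nat_of_ord q == i) && (nat_of_ord r == i.+1)).
  have c1 := cut (sref n i q); have c2 := cut (sref n i p).
  move: c1 c2; rewrite sq sp eq !eqxx.
  have -> : (nat_of_ord p == i) = false by apply/eqP; lia.
  have -> : (nat_of_ord p == i.+1) = false by apply/eqP; lia.
  move=> c1 c2; lia.
apply: (IH vs us (sref n i p) (sref n i q) (sref n i r)); exact: tau_mono.
Qed.

Definition no321 (u : seq nat) := forall i j k, i < j -> j < k -> k < size u ->
  ~ (nth 0 u j < nth 0 u i /\ nth 0 u k < nth 0 u j).

Definition Dinv (u : seq nat) y := exists i j, [/\ i < j, j < size u, y <= nth 0 u j & nth 0 u j < nth 0 u i].

Definition ins2 (st : seq nat * seq nat) x :=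
  let: (r1, r2) := st in
  match bump_row r1 x with
  | (None, r1') => (r1', r2)
  | (Some y, r1') => (r1', rcons r2 y)
  end.

Definition rep (r1 r2 : seq nat) :=
  if r1 == [::] then [::] else if r2 == [::] then [:: r1] else [:: r1; r2].

Lemma bumpP r x :
  (all (fun y => y <= x) r /\ bump_row r x = (None, rcons r x)) \/
  (exists a y b, [/\ r = a ++ y :: b, all (fun z => z <= x) a, x < y &
                     bump_row r x = (Some y, a ++ x :: b)]).
Proof.
elim: r => [|y r IH] /=; first by left.
case: ifP => hxy.
  by right; exists [::], y, r.
case: IH => [[ha hb]|[a [y' [b [er ha hx hb]]]]].
  by left; rewrite hb /= ha andbT; split => //; lia.
right; exists (y :: a), y', b; rewrite hb er /=; split => //.
by rewrite ha andbT; lia.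
Qed.

Lemma bump_none r x : all (fun y => y <= x) r -> bump_row r x = (None, rcons r x).
Proof.
case: (bumpP r x) => [[_ ->]|[a [y [b [er _ hx _]]]]] // hall.
by move/allP: hall => /(_ y); rewrite er mem_cat inE eqxx orbT => /(_ isT); lia.
Qed.

Lemma bump_last r x y : all (fun z => z <= x) r -> x < y ->
  bump_row (rcons r y) x = (Some y, rcons r x).
Proof.
elim: r => [|z r IH] /=; first by move=> _ ->.
move=> /andP [hz hr] hxy; rewrite ifN; last by lia.
by rewrite IH.
Qed.

Lemma no321_rcons u x : no321 (rcons u x) -> no321 u.
Proof.
move=> h i j k hij hjk hk; have := h i j k hij hjk.
rewrite size_rcons !nth_rcons (ltn_trans hij (ltn_trans hjk hk)) (ltn_trans hjk hk) hk.
by apply; lia.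
Qed.

Lemma Dinv_rcons u x y : Dinv u y -> Dinv (rcons u x) y.
Proof.
move=> [i [j [hij hj h1 h2]]]; exists i, j.
rewrite size_rcons !nth_rcons hj (ltn_trans hij hj); split => //; lia.
Qed.

Lemma Dinv_new u x y z : z \in u -> y <= x -> x < z -> Dinv (rcons u x) y.
Proof.
move=> hz hyx hxz; exists (index z u), (size u).
rewrite size_rcons !nth_rcons ltnn eqxx index_mem hz nth_index //; split => //; by rewrite -index_mem in hz.
Qed.

Lemma no321_D u x y : no321 (rcons u x) -> Dinv u y -> x < y -> False.
Proof.
move=> h [i [j [hij hj h1 h2]]] hxy.
have := h i j (size u) hij hj; rewrite size_rcons ltnSn => /(_ isT).
rewrite !nth_rcons hj (ltn_trans hij hj) ltnn eqxx; apply; lia.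
Qed.

Lemma count_all (P : pred nat) s : (forall z, z \in s -> P z) -> count P s = size s.
Proof. by move=> h; rewrite -count_predT; apply: eq_in_count => z /h ->. Qed.

Lemma count_none (P : pred nat) s : (forall z, z \in s -> ~~ P z) -> count P s = 0.
Proof. by move=> h; rewrite -(count_pred0 s); apply: eq_in_count => z /h /negPf ->. Qed.

Definition Inv (u r1 r2 : seq nat) :=
  [/\ sorted leq r1, {subset r1 <= u} /\ {subset r2 <= u},
      (forall y z, y \in r1 -> z \in r2 -> y < z -> Dinv u y),
      (forall t, count (fun z => z <= t) r2 <= count (fun y => y < t) r1) &
      size r2 <= size r1 /\ size r1 + size r2 = size u].

Lemma rs2 u : no321 u ->
  Inv u (foldl ins2 ([::], [::]) u).1 (foldl ins2 ([::], [::]) u).2 /\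
  rs_P u = rep (foldl ins2 ([::], [::]) u).1 (foldl ins2 ([::], [::]) u).2.
Proof.
elim/last_ind: u => [|u x IH] h.
  split => //; split => //.
have h' := no321_rcons h.
move: (IH h'); rewrite /rs_P !foldl_rcons.
case: (foldl ins2 ([::], [::]) u) => r1 r2 /= [[hs [h1 h2] hD hQ [hsz hsum]] ->].
have hs' := hs; rewrite (sorted_pairwise leq_trans) in hs'.
rewrite /ins2; case: (bumpP r1 x) => [[hall hb]|[a [y0 [b [er hall hxy hb]]]]]; rewrite hb /=.
  split.
    split.
    - rewrite (sorted_pairwise leq_trans) -cats1 pairwise_cat allrel1r hs' andbT /=.
      exact: hall.
    - split => z; rewrite ?mem_rcons !inE.
        by case/orP => [/eqP ->|/h1 ->]; rewrite ?eqxx ?orbT.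
      by move/h2 => ->; rewrite orbT.
    - move=> y z; rewrite mem_rcons inE => /orP [/eqP ->|hy] hz hyz.
        exact: Dinv_new (h2 z hz) (leqnn x) hyz.
      exact: Dinv_rcons (hD y z hy hz hyz).
    - by move=> t; rewrite -cats1 count_cat; have := hQ t; lia.
    - by rewrite !size_rcons; lia.
  rewrite /rep; have [e|ne] := eqVneq r1 [::].
    move: hsz; rewrite e leqn0 size_eq0 => /eqP -> /=; by [].
  rewrite (_ : (rcons r1 x == [::]) = false); last by case: (r1).
  case: eqP => _ /=; rewrite hb //.
have hr1 z : (z \in a) || (z \in b) -> z \in r1.
  by rewrite er mem_cat inE => /orP [->|->]; rewrite ?orbT.
have hy0r1 : y0 \in r1 by rewrite er mem_cat inE eqxx orbT.
have hy0 : forall z, z \in r2 -> z <= y0.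
  move=> z hz; rewrite leqNgt; apply/negP => hlt.
  exact: no321_D h (hD y0 z hy0r1 hz hlt) hxy.
have hs2 : pairwise leq (a ++ y0 :: b) by rewrite -er.
move: hs2; rewrite pairwise_cat pairwise_cons allrel_consr => /and3P [/andP [hay0 hab] hpa /andP [hby0 hpb]].
have hbge : forall z, z \in b -> y0 <= z by move=> z; move/allP: hby0 => /(_ z).
have hale : forall z, z \in a -> z <= x by move=> z; move/allP: hall => /(_ z).
have hsa : size r2 <= size a.
  have := hQ y0; rewrite er count_cat /= (count_all (P := fun z => z <= y0) (s := r2) hy0).
  rewrite (count_all (P := fun z => z < y0) (s := a)); last by move=> z /hale; lia.
  rewrite (count_none (P := fun z => z < y0) (s := b)); last by move=> z /hbge; lia.
  by rewrite ltnn /=; lia.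
split.
  split.
  - rewrite (sorted_pairwise leq_trans) pairwise_cat pairwise_cons allrel_consr hab hpa hpb.
    rewrite !andbT; apply/andP; split; first exact: hall.
    by apply/allP => z /hbge; lia.
  - split => z.
      rewrite mem_cat inE mem_rcons inE => /or3P [ha|->|hb'].
          by rewrite h1 ?orbT // hr1 // ha.
        by [].
      by rewrite h1 ?orbT // hr1 // hb' orbT.
    by rewrite !mem_rcons !inE => /orP [/eqP ->|/h2 ->]; rewrite ?h1 ?orbT.
  - have zu : forall z, z \in rcons r2 y0 -> z \in u.
      by move=> z; rewrite mem_rcons inE => /orP [/eqP ->|/h2 //]; apply: h1.
    move=> y z; rewrite mem_cat inE => /or3P [ha|/eqP ->|hb'] hz hyz.
    + move: hz; rewrite mem_rcons inE => /orP [/eqP ez|hz].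
        by apply: (Dinv_new (z := y0)); [exact: h1|exact: hale|exact: hxy].
      by apply: Dinv_rcons; apply: (hD y z) => //; apply: hr1; rewrite ha.
    + exact: Dinv_new (zu z hz) (leqnn x) hyz.
    + move: hz; rewrite mem_rcons inE => /orP [/eqP ez|hz].
        by move: (hbge y hb'); rewrite -ez; lia.
      by apply: Dinv_rcons; apply: (hD y z) => //; apply: hr1; rewrite hb' orbT.
  - move=> t; have := hQ t; rewrite er -cats1 !count_cat /=.
    case: (leqP y0 t) => ht.
      rewrite (count_all (P := fun z => z <= t) (s := r2)); last by move=> z /hy0; lia.
      rewrite (count_all (P := fun z => z < t) (s := a)); last by move=> z /hale; lia.
      have -> : x < t by lia.
      by move=> _; apply: leq_add; [exact: hsa|rewrite /= addn0 leq_addr].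
    have -> : (y0 < t) = false by apply/negbTE; rewrite -leqNgt; lia.
    lia.
  - rewrite !size_rcons er !size_cat /= in hsum *; split; lia.
rewrite /rep (_ : (a ++ x :: b == [::]) = false); last by case: (a).
rewrite (_ : (r1 == [::]) = false); last by rewrite er; case: (a).
rewrite (_ : (rcons r2 y0 == [::]) = false); last by case: (r2).
case: eqP => [->|_] /=; rewrite hb //=.
rewrite bump_none //; apply/allP => z /hy0; lia.
Qed.

Definition oneline n (v : 'S_n) := [seq val (v i) | i <- enum 'I_n].

Lemma size_oneline n (v : 'S_n) : size (oneline v) = n.
Proof. by rewrite size_map size_enum_ord. Qed.

Lemma oneline_nth n (v : 'S_n) (k : 'I_n) : nth 0 (oneline v) k = val (v k).
Proof. by rewrite (nth_map k) ?size_enum_ord // nth_ord_enum. Qed.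

Lemma no321_oneline n s : valid_word n s -> uniq s -> no321 (oneline (word_prod n s)).
Proof.
move=> vs us i j k hij hjk; rewrite size_oneline => hk.
have hi : i < n by lia.
have hj : j < n by lia.
have := oneline_nth (word_prod n s) (Ordinal hi).
have := oneline_nth (word_prod n s) (Ordinal hj).
have := oneline_nth (word_prod n s) (Ordinal hk).
rewrite /= => -> -> ->.
exact: (no321_word vs us (p := Ordinal hi) (q := Ordinal hj) (r := Ordinal hk)).
Qed.

Definition shp a b : seq nat := if a == 0 then [::] else if b == 0 then [:: a] else [:: a; b].

Lemma shape_rep r1 r2 : size r2 <= size r1 -> map size (rep r1 r2) = shp (size r1) (size r2).
Proof. by rewrite /rep /shp; case: r1 => [|? ?]; case: r2 => [|? ?]. Qed.

Lemma nth_shp a b : b <= a -> nth 0 (shp a b) 1 = b.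
Proof. by rewrite /shp; case: a => [|a]; case: b => [|b]. Qed.

Definition fw m x := if x < 2 * m then flip x else x.

Lemma oneline_wm n m : 2 * m <= n -> oneline (wm n m) = map (fw m) (iota 0 n).
Proof.
move=> hm; rewrite /oneline -val_enum_ord -map_comp; apply: eq_map => i /=.
by rewrite /wm tw_val // andbT.
Qed.

Definition evens k := [seq 2 * j | j <- iota 0 k].
Definition odds k := [seq (2 * j).+1 | j <- iota 0 k].

Lemma foldA m k : k <= m ->
  foldl ins2 ([::], [::]) (map (fw m) (iota 0 (2 * k))) = (evens k, odds k).
Proof.
elim: k => [|k IH] hk //.
have -> : 2 * k.+1 = 2 * k + 2 by lia.
rewrite iotaD map_cat foldl_cat IH; last by lia.
rewrite /= /fw (_ : 2 * k < 2 * m); last by lia.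
rewrite (_ : (2 * k).+1 < 2 * m); last by lia.
rewrite /flip (_ : (2 * k) %% 2 == 0); last by apply/eqP; lia.
rewrite (_ : ((2 * k).+1 %% 2 == 0) = false); last by apply/eqP; lia.
rewrite (_ : (2 * k).+1 - 1 = 2 * k); last by lia.
have ev : forall X, 2 * k <= X -> all (fun z => z <= X) (evens k).
  by move=> X hX; apply/allP => z /mapP [j]; rewrite mem_iota => /andP [_ hj] ->; lia.
rewrite /ins2 bump_none; last by apply: ev; lia.
rewrite bump_last //; last by apply: ev.
by rewrite /evens /odds iotaSr !map_rcons.
Qed.

Lemma foldB c : forall r1 r2 s, all (fun z => z < s) r1 ->
  foldl ins2 (r1, r2) (iota s c) = (r1 ++ iota s c, r2).
Proof.
elim: c => [|c IH] r1 r2 s h /=; first by rewrite cats0.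
rewrite bump_none; last by apply/allP => z /(allP h); lia.
rewrite IH ?cat_rcons //; rewrite all_rcons /=; apply/andP; split => //.
by apply/allP => z /(allP h); lia.
Qed.

Lemma fold_wm n m : 2 * m <= n ->
  foldl ins2 ([::], [::]) (oneline (wm n m)) = (evens m ++ iota (2 * m) (n - 2 * m), odds m).
Proof.
move=> hm; rewrite oneline_wm // (_ : n = 2 * m + (n - 2 * m)); last by lia.
rewrite iotaD map_cat foldl_cat foldA // add0n.
rewrite (_ : 2 * m + (n - 2 * m) - 2 * m = n - 2 * m); last by lia.
rewrite (_ : map (fw m) (iota (2 * m) (n - 2 * m)) = iota (2 * m) (n - 2 * m)).
  rewrite foldB //; apply/allP => z /mapP [j]; rewrite mem_iota => /andP [_ hj] ->; lia.
rewrite -[RHS]map_id; apply/eq_in_map => z; rewrite mem_iota /fw => /andP [h1 _].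
by rewrite ifN //; lia.
Qed.

Lemma uniq_tw m : uniq (tw predT m).
Proof.
rewrite /tw map_inj_uniq ?filter_uniq ?iota_uniq //.
by move=> a b h; lia.
Qed.

Theorem corollary6p6 (n : nat) (a : 'S_n -> nat) :
  is_a_function a -> forall v : 'S_n, boolean_perm v -> a v = lambda2 v.
Proof.
move=> [ha1 ha2] v hv.
have [s hs] := reduced_exists v.
have us := hv s hs.
case: hs => vs ps _.
have no := no321_oneline vs us; rewrite ps in no.
have [[_ _ _ _ [hsz hsum]] hrs] := rs2 no.
move: hsz hsum hrs; set r1 := (foldl _ _ _).1; set r2 := (foldl _ _ _).2 => hsz hsum hrs.
rewrite size_oneline in hsum.
set m := size r2.
have hm : 2 * m <= n by rewrite /m; lia.
have shv : rs_shape v = shp (size r1) m by rewrite /rs_shape -/(oneline v) hrs shape_rep.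
have lv : lambda2 v = m by rewrite /lambda2 shv nth_shp.
have now := no321_oneline (valid_tw predT hm) (uniq_tw m).
have [_ hrw] := rs2 now.
rewrite -/(wm n m) fold_wm //= in hrw.
have shw : rs_shape (wm n m) = shp (size r1) m.
  rewrite /rs_shape -/(oneline (wm n m)) hrw shape_rep; last first.
    by rewrite size_cat /evens /odds !size_map !size_iota; lia.
  rewrite size_cat /evens /odds !size_map !size_iota.
  by congr shp; lia.
rewrite lv (ha1 v (wm n m)); last by rewrite shv shw.
exact: (ha2 (Jset n m) (wm n m) m (wm_longest hm) (wm_len hm)).
Qed.
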